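(* Let $\alpha\in(0,1]$, $\beta=1-\alpha$, and let $f:[a,b]\to\mathbb{R}$ ($a<b$) be continuous on $[a,b]$ and $\alpha$-differentiable on $(a,b)$. Then there exists $c\in(a,b)$ such that $$D^\alpha f(c)=\beta f(c)+\alpha\,\frac{f(b)-f(a)}{b-a}.$$
   Context: For a real function $f$ defined on an open interval $(a,b)$, a number $\alpha\in[0,1]$ and $\beta=1-\alpha$, the deformable derivative ($\alpha$-derivative) of $f$ at $t\in(a,b)$ is $$D^\alpha f(t)=\lim_{\epsilon\to0}\frac{(1+\epsilon\beta)f(t+\epsilon\alpha)-f(t)}{\epsilon},$$ whenever this limit exists; in that case $f$ is called $\alpha$-differentiable at $t$. $f$ is $\alpha$-differentiable on $(a,b)$ if it is so at every point of $(a,b)$. *)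

(* Defs.v *)
From Stdlib Require Import Reals.
Open Scope R_scope.

Definition alpha_deriv_at (alpha : R) (f : R -> R) (t L : R) : Prop :=
  forall e : R, 0 < e -> exists d : R, 0 < d /\
    forall h : R, h <> 0 -> Rabs h < d ->
      Rabs (((1 + h * (1 - alpha)) * f (t + h * alpha) - f t) / h - L) < e.

Definition alpha_differentiable_at (alpha : R) (f : R -> R) (t : R) : Prop :=
  exists L : R, alpha_deriv_at alpha f t L.

Definition continuous_on_closed (f : R -> R) (a b : R) : Prop :=
  forall x : R, a <= x <= b ->
    forall e : R, 0 < e -> exists d : R, 0 < d /\
      forall y : R, a <= y <= b -> Rabs (y - x) < d -> Rabs (f y - f x) < e.

(* Main.v *)
Require Import Defs.
From Stdlib Require Import Reals Lra ClassicalEpsilon.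
Open Scope R_scope.

Lemma Rabs_div' x y : y <> 0 -> Rabs (x / y) = Rabs x / Rabs y.
Proof. intros; unfold Rdiv; rewrite Rabs_mult, Rabs_inv; reflexivity. Qed.

Lemma alpha_to_deriv (alpha : R) (f : R -> R) (t L : R) :
  0 < alpha <= 1 -> alpha_deriv_at alpha f t L ->
  derivable_pt_lim f t ((L - (1 - alpha) * f t) / alpha).
Proof.
  intros [Ha Ha1] HL eps Heps.
  set (C := Rabs (L - (1 - alpha) * f t)).
  assert (HC : 0 <= C) by apply Rabs_pos.
  destruct (HL (eps * alpha / 4)) as [d [Hd Hq]].
  { apply Rmult_lt_0_compat; [nra|lra]. }
  assert (Hpos : 0 < Rmin (d * alpha) (Rmin (alpha / 2) (eps * alpha * alpha / (4 * (C + 1))))).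
  { repeat apply Rmin_pos; try nra.
    apply Rdiv_lt_0_compat; [|lra]. apply Rmult_lt_0_compat; [|lra]. nra. }
  exists (mkposreal _ Hpos). intros k Hk0 Hk. simpl in Hk.
  assert (Hk1 := Rlt_le_trans _ _ _ Hk (Rmin_l _ _)).
  assert (Hk2 := Rlt_le_trans _ _ _ Hk (Rmin_r _ _)).
  assert (Hk3 := Rlt_le_trans _ _ _ Hk2 (Rmin_l _ _)).
  assert (Hk4 := Rlt_le_trans _ _ _ Hk2 (Rmin_r _ _)).
  clear Hk Hk2.
  set (h := k / alpha).
  assert (Hkh : k = h * alpha) by (unfold h; field; lra).
  assert (Hah : Rabs h = Rabs k / alpha).
  { unfold h. rewrite Rabs_div' by lra. rewrite (Rabs_right alpha) by lra. reflexivity. }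
  assert (Hh0 : h <> 0).
  { intro E. apply Hk0. rewrite Hkh, E. ring. }
  assert (Hhd : Rabs h < d).
  { rewrite Hah. apply Rmult_lt_reg_r with alpha; [lra|].
    unfold Rdiv. rewrite Rmult_assoc, Rinv_l by lra. lra. }
  assert (Hh2 : Rabs h < 1/2).
  { rewrite Hah. apply Rmult_lt_reg_r with alpha; [lra|].
    unfold Rdiv. rewrite Rmult_assoc, Rinv_l by lra. lra. }
  assert (Hh3 : Rabs h * (C + 1) < eps * alpha / 4).
  { rewrite Hah. apply Rmult_lt_reg_r with (4 * alpha / (C + 1) * alpha); [apply Rmult_lt_0_compat; [apply Rdiv_lt_0_compat|]; lra|].
    assert (Rabs k * 4 < eps * alpha * alpha / (C + 1)).
    { apply Rmult_lt_reg_r with (/4); [lra|].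
      replace (Rabs k * 4 * / 4) with (Rabs k) by field.
      replace (eps * alpha * alpha / (C + 1) * / 4) with (eps * alpha * alpha / (4 * (C + 1))) by (field; lra).
      exact Hk4. }
    replace (Rabs k / alpha * (C + 1) * (4 * alpha / (C + 1) * alpha)) with (Rabs k * 4 * alpha) by (field; lra).
    replace (eps * alpha / 4 * (4 * alpha / (C + 1) * alpha)) with (eps * alpha * alpha / (C + 1) * alpha) by (field; lra).
    nra. }
  specialize (Hq h Hh0 Hhd).
  set (q := ((1 + h * (1 - alpha)) * f (t + h * alpha) - f t) / h) in Hq.
  assert (Hb : 1/2 < 1 + h * (1 - alpha)).
  { assert (Habs := Rabs_def2 _ _ Hh2). destruct Habs. nra. }
  assert (Hid : (f (t + k) - f t) / k - (L - (1 - alpha) * f t) / alpha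
     = ((q - L) - h * (1 - alpha) * (L - (1 - alpha) * f t)) / (alpha * (1 + h * (1 - alpha)))).
  { rewrite Hkh. unfold q. field. repeat split; lra. }
  rewrite Hid, Rabs_div' by (apply Rgt_not_eq; nra).
  rewrite (Rabs_right (alpha * _)) by nra.
  apply Rmult_lt_reg_r with (alpha * (1 + h * (1 - alpha))); [nra|].
  unfold Rdiv. rewrite Rmult_assoc, Rinv_l by nra. rewrite Rmult_1_r.
  eapply Rle_lt_trans; [apply Rabs_triang|].
  rewrite Rabs_Ropp, !Rabs_mult. fold C.
  rewrite (Rabs_right (1 - alpha)) by lra.
  assert (Rabs h * (1 - alpha) * C <= Rabs h * (C + 1)).
  { assert (0 <= Rabs h) by apply Rabs_pos. assert (0 <= Rabs h * C) by (apply Rmult_le_pos; lra). nra. }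
  assert (eps * alpha / 2 < eps * (alpha * (1 + h * (1 - alpha)))).
  { assert (0 < eps * alpha) by nra. nra. }
  lra.
Qed.

Definition clamp (a b x : R) := Rmax a (Rmin b x).

Lemma clamp_in a b x : a <= b -> a <= clamp a b x <= b.
Proof. intros; unfold clamp, Rmax, Rmin; repeat destruct Rle_dec; lra. Qed.

Lemma clamp_lip a b x y : a <= b -> Rabs (clamp a b y - clamp a b x) <= Rabs (y - x).
Proof. intros; unfold clamp, Rmax, Rmin; repeat destruct Rle_dec; unfold Rabs;
  repeat destruct Rcase_abs; lra. Qed.

Lemma clamp_id a b x : a <= x <= b -> clamp a b x = x.
Proof. intros; unfold clamp, Rmax, Rmin; repeat destruct Rle_dec; lra. Qed.

Theorem theorem3p2 (alpha a b : R) (f : R -> R) :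
  0 < alpha <= 1 -> a < b ->
  continuous_on_closed f a b ->
  (forall t : R, a < t < b -> alpha_differentiable_at alpha f t) ->
  exists c : R, a < c < b /\
    alpha_deriv_at alpha f c
      ((1 - alpha) * f c + alpha * ((f b - f a) / (b - a))).
Proof.
  intros Ha Hab Hc Hd.
  set (g := fun x => f (clamp a b x)).
  assert (Hgc : forall x, continuity_pt g x).
  { intros x eps Heps.
    destruct (Hc (clamp a b x) (clamp_in a b x ltac:(lra)) eps Heps) as [d [Hd0 Hd1]].
    exists d; split; [lra|]. intros y [_ Hy]. unfold R_dist in *. unfold g.
    apply Hd1; [apply clamp_in; lra|].
    eapply Rle_lt_trans; [apply clamp_lip; lra|exact Hy]. }
  assert (Hgd : forall t L, a < t < b -> alpha_deriv_at alpha f t L ->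
     derivable_pt_lim g t ((L - (1 - alpha) * f t) / alpha)).
  { intros t L Ht HL eps Heps.
    destruct (alpha_to_deriv alpha f t L Ha HL eps Heps) as [d Hd1].
    assert (Hp : 0 < Rmin d (Rmin (t - a) (b - t))).
    { repeat apply Rmin_pos; try lra. apply cond_pos. }
    exists (mkposreal _ Hp). intros k Hk0 Hk. simpl in Hk.
    assert (Hk1 := Rlt_le_trans _ _ _ Hk (Rmin_l _ _)).
    assert (Hk2 := Rlt_le_trans _ _ _ Hk (Rmin_r _ _)).
    assert (Hk3 := Rlt_le_trans _ _ _ Hk2 (Rmin_l _ _)).
    assert (Hk4 := Rlt_le_trans _ _ _ Hk2 (Rmin_r _ _)).
    destruct (Rabs_def2 _ _ Hk3). destruct (Rabs_def2 _ _ Hk4).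
    unfold g. rewrite !clamp_id by lra. now apply Hd1. }
  assert (pr : forall c, a < c < b -> derivable_pt g c).
  { intros c Hc'. apply constructive_indefinite_description.
    destruct (Hd c Hc') as [L HL]. eexists. apply (Hgd c L Hc' HL). }
  assert (pr2 : forall c, a < c < b -> derivable_pt id c).
  { intros; apply derivable_pt_id. }
  destruct (MVT g id a b pr pr2 Hab (fun c _ => Hgc c)
     (fun c _ => derivable_continuous_pt _ _ (derivable_pt_id c))) as [c [P HM]].
  exists c; split; [exact P|].
  destruct (Hd c P) as [L HL].
  assert (E1 : derive_pt g c (pr c P) = (L - (1 - alpha) * f c) / alpha).
  { apply derive_pt_eq_0. apply (Hgd c L P HL). }
  assert (E2 : derive_pt id c (pr2 c P) = 1).
  { apply derive_pt_eq_0. apply derivable_pt_lim_id. }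
  rewrite E1, E2 in HM. unfold id, g in HM.
  rewrite !clamp_id in HM by lra.
  replace ((1 - alpha) * f c + alpha * ((f b - f a) / (b - a))) with L; [exact HL|].
  apply Rmult_eq_reg_r with (b - a); [|lra].
  assert (alpha <> 0) by lra.
  replace ((f b - f a)) with ((b - a) * ((L - (1 - alpha) * f c) / alpha)) by lra.
  field. lra.
Qed.
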